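(* Let $H=([n],E)$ be a hypergraph without loops. For $1\le a\le\#E$ and $b\in\mathbb{N}$ let $s(a,b)$ be the number of $a$-element subsets $S\subseteq E$ such that the hypergraph $([n],S)$ has exactly $b$ connected components (isolated vertices counting as components); set $s(0,n)=1$ and $s(0,b)=0$ for $b\ne n$. Write $T(b,i)=\sum_{c=0}^i(-1)^c\binom{i}{c}(i-c+2)^b$. Then for all $0\le i\le n$ and every $0\le m\le\#E$: \[f_i(\chi_H(k+1))=\sum_{a=0}^{\#E}(-1)^a\sum_{b=0}^n s(a,b)\,T(b,i),\] \[f_i(\chi_H(k+1))\le\sum_{a=0}^{m}(-1)^a\sum_{b=0}^n s(a,b)\,T(b,i)\quad\text{if $m$ is even},\] \[f_i(\chi_H(k+1))\ge\sum_{a=0}^{m}(-1)^a\sum_{b=0}^n s(a,b)\,T(b,i)\quad\text{if $m$ is odd}.\] Moreover, if $l=\min\{\#F: F\in E\}$ and $n-l+2\le i\le n$, then $f_i(\chi_H(k+1))=\sum_{j=0}^i(-1)^j\binom{i}{j}(i-j+2)^n$.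
   Context: A hypergraph $H=([n],E)$ has edges that are nonempty subsets of $[n]$; ''without loops'' means no edge has cardinality 1; also no edge is properly contained in another. A proper $k$-coloring is a map $[n]\to[k]$ with no monochromatic edge; $\chi_H(k)$ is the number of proper $k$-colorings. For a polynomial $p(k)$ of degree at most $n$, its $f$-vector is defined by $p(k)=\sum_{i=0}^n f_i(p)\binom{k-1}{i}$, $f_{-1}=1$; here $f_i(\chi_H(k+1))$ refers to the polynomial $k\mapsto\chi_H(k+1)$. *)

(* Defs.v *)
From HB Require Import structures.
From mathcomp Require Import all_boot all_order all_algebra.
Set Implicit Arguments. Unset Strict Implicit. Unset Printing Implicit Defensive.
Import GRing.Theory Num.Theory.

Definition hypergraph_no_loops (n : nat) (E : {set {set 'I_n}}) : Prop :=
  [/\ (forall F, F \in E -> F != set0),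
      (forall F, F \in E -> #|F| != 1%N)   &      (* no loops *)
      (forall F G, F \in E -> G \in E -> ~~ (F \proper G))].

Definition monochromatic (n k : nat) (c : {ffun 'I_n -> 'I_k}) (F : {set 'I_n}) : bool :=
  [exists j : 'I_k, [forall x in F, c x == j]].

Definition proper_coloring (n k : nat) (E : {set {set 'I_n}}) (c : {ffun 'I_n -> 'I_k}) : bool :=
  [forall F in E, ~~ monochromatic c F].

Definition chi (n : nat) (E : {set {set 'I_n}}) (k : nat) : nat :=
  #|[set c : {ffun 'I_n -> 'I_k} | proper_coloring E c]|.

(* f is the f-vector of the polynomial k |-> chi_H(k+1):
   chi_H(k+1) = sum_{i=0}^n f_i * binom(k-1, i)  (as polynomials in k,
   equivalently at all integers k >= 1). *)
Definition is_fvector_chi_shift (n : nat) (E : {set {set 'I_n}}) (f : nat -> int) : Prop :=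
  forall k : nat, (1 <= k)%N ->
    ((chi E k.+1)%:Z = \sum_(i < n.+1) f i * ('C(k.-1, i))%:Z)%R.

Definition hadj (n : nat) (S : {set {set 'I_n}}) : rel 'I_n :=
  fun x y => [exists F in S, (x \in F) && (y \in F)].

Definition ncomp (n : nat) (S : {set {set 'I_n}}) : nat :=
  n_comp (hadj S) 'I_n.

Definition s_count (n : nat) (E : {set {set 'I_n}}) (a b : nat) : nat :=
  if a == 0%N then (b == n : nat)
  else #|[set S in powerset E | (#|S| == a) && (ncomp S == b)]|.

Definition T_coef (b i : nat) : int :=
  (\sum_(c < i.+1) (-1) ^+ c * ('C(i, c))%:Z * ((i - c + 2)%N)%:Z ^+ b)%R.

Definition partial_sum (n : nat) (E : {set {set 'I_n}}) (m i : nat) : int :=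
  (\sum_(a < m.+1) (-1) ^+ a * \sum_(b < n.+1) (s_count E a b)%:Z * T_coef b i)%R.

(* Main.v *)
Require Import Defs.
From HB Require Import structures.
From mathcomp Require Import all_boot all_order all_algebra.
From mathcomp Require Import ring lra zify.
Set Implicit Arguments. Unset Strict Implicit. Unset Printing Implicit Defensive.
Import Order.TTheory GRing.Theory Num.Theory.
Local Open Scope ring_scope.

Lemma alt_sum (N m : nat) :
  \sum_(a < m.+1) (-1) ^+ a * ('C(N, a))%:Z =
  if N == 0%N then 1 else (-1) ^+ m * ('C(N.-1, m))%:Z.
Proof.
elim: m => [|m IH].
  by rewrite big_ord1 /= !bin0; case: N.
rewrite big_ord_recr /= IH; case: N {IH} => [|N] /=.
  by rewrite bin0n /= mulr0 addr0.
rewrite binS PoszD exprS; ring.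
Qed.

Lemma cardZ (T : finType) (U : {set T}) (Q : pred T) :
  (#|[set x in U | Q x]|)%:Z = \sum_(x in U) (Q x : nat)%:Z.
Proof.
rewrite -sum1_card -natz natr_sum big_mkcond [RHS]big_mkcond /=.
apply: eq_bigr => x _; rewrite inE; case: (x \in U); case: (Q x) => //=; rewrite natz.
Qed.

Lemma regroup (I : finType) (D : {set I}) (m : nat) (G : {set I} -> int) :
  \sum_(S in powerset D | (#|S| <= m)%N) G S =
  \sum_(a < m.+1) \sum_(S in powerset D | #|S| == a) G S.
Proof.
rewrite (partition_big (fun S : {set I} => (inord #|S| : 'I_m.+1)) xpredT) //=.
apply: eq_bigr => a _; apply: eq_bigl => S.
case: (S \in powerset D) => //=.
case: (leqP #|S| m) => Hs /=.
  by rewrite -val_eqE /= inordK.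
apply/esym/negbTE/eqP => Ha; move: (ltn_ord a); rewrite -Ha ltnS leqNgt Hs.
done.
Qed.

Lemma sum_by_size (I : finType) (D : {set I}) (m : nat) (F : nat -> int) :
  \sum_(S in powerset D | (#|S| <= m)%N) F #|S| =
  \sum_(a < m.+1) ('C(#|D|, a))%:Z * F a.
Proof.
rewrite regroup; apply: eq_bigr => a _.
rewrite (eq_bigr (fun _ => F a)); last by move=> S /andP[_ /eqP ->].
rewrite (eq_bigl (fun S => S \in [set S in powerset D | #|S| == a])); last first.
  by move=> S; rewrite inE.
rewrite sumr_const -cards_draws -mulr_natl natz.
congr (Posz _ * _); apply: eq_card => S; rewrite !inE.
done.
Qed.

Lemma bonf (T I : finType) (U : {set T}) (D : {set I}) (A : I -> T -> bool) (m : nat) :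
  \sum_(S in powerset D | (#|S| <= m)%N)
      (-1) ^+ #|S| * (#|[set x in U | [forall j in S, A j x]]|)%:Z
  - (#|[set x in U | [forall j in D, ~~ A j x]]|)%:Z
  = \sum_(x in U) (if #|[set j in D | A j x]| == 0%N then 0
                   else (-1) ^+ m * ('C(#|[set j in D | A j x]|.-1, m))%:Z).
Proof.
rewrite [X in X - _](eq_bigr (fun S : {set I} => \sum_(x in U) (-1) ^+ #|S| * ([forall j in S, A j x] : nat)%:Z)); last first.
  by move=> S _; rewrite cardZ mulr_sumr.
rewrite exchange_big /= cardZ -sumrB; apply: eq_bigr => x Ux.
set J := [set j in D | A j x].
have -> : \sum_(S in powerset D | (#|S| <= m)%N)
    (-1) ^+ #|S| * ([forall j in S, A j x] : nat)%:Z =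
    \sum_(S in powerset J | (#|S| <= m)%N) (-1) ^+ #|S|.
  rewrite big_mkcond [RHS]big_mkcond /=; apply: eq_bigr => S _.
  rewrite !powersetE.
  have -> : (S \subset J) = (S \subset D) && [forall j in S, A j x].
    apply/subsetP/andP => [H|[/subsetP H1 /forall_inP H2] j Hj].
      split; first by apply/subsetP => j /H; rewrite inE => /andP[].
      by apply/forall_inP => j /H; rewrite inE => /andP[].
    by rewrite inE H1 ?H2.
  by case: (S \subset D); case: [forall j in S, A j x]; case: (#|S| <= m)%N => //=;
     rewrite ?mulr1 ?mulr0.
rewrite (sum_by_size J m (fun a => (-1) ^+ a)).
rewrite (eq_bigr (fun a : 'I_m.+1 => (-1) ^+ a * ('C(#|J|, a))%:Z)); last first.
  by move=> a _; rewrite mulrC.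
rewrite alt_sum.
have -> : [forall j in D, ~~ A j x] = (#|J| == 0%N).
  rewrite cards_eq0; apply/forall_inP/eqP => [H|H j Hj].
    by apply/setP => j; rewrite !inE; case Hj: (j \in D) => //=; apply/negbTE/H.
  apply/negP => Ha; have : j \in J by rewrite inE Hj Ha.
  by rewrite H inE.
by case: (#|J| == 0%N); rewrite /= ?subrr ?subr0.
Qed.

Definition imf (n y : nat) (c : {ffun 'I_n -> 'I_y}) : {set 'I_y} := [set c x | x : 'I_n].
Definition Smono (n y : nat) (S : {set {set 'I_n}}) (c : {ffun 'I_n -> 'I_y}) :=
  [forall F in S, monochromatic c F].
Definition cntQ (y b : nat) (Q : {set 'I_y} -> bool) :=
  #|[set d : {ffun 'I_b -> 'I_y} | Q (imf d)]|.
Arguments cntQ y b Q : clear implicits.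

Lemma hadj_sym n (S : {set {set 'I_n}}) : symmetric (hadj S).
Proof.
move=> x z; apply/existsP/existsP => -[F /andP[FS /andP[h1 h2]]];
  by exists F; rewrite FS h1 h2.
Qed.

Lemma mono_of_const n y (c : {ffun 'I_n -> 'I_y}) (F : {set 'I_n}) : (0 < y)%N ->
  (forall u v, u \in F -> v \in F -> c u = c v) -> monochromatic c F.
Proof.
move=> y0 H; case: (pickP (mem F)) => [x0 Hx0|none].
  by apply/existsP; exists (c x0); apply/forall_inP => v Hv; rewrite (H v x0).
apply/existsP; exists (Ordinal y0); apply/forall_inP => v Hv.
by move: (none v); rewrite /= Hv.
Qed.

Lemma mono_const n y (S : {set {set 'I_n}}) (c : {ffun 'I_n -> 'I_y}) :
  Smono S c -> forall x z, connect (hadj S) x z -> c x = c z.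
Proof.
move=> /forall_inP Hm x z /connectP [p pth ->] {z}.
elim: p x pth => [|z p IH] x //= /andP[exz pth].
rewrite -(IH z pth); move: exz => /existsP [F /andP [FS /andP[hx hz]]].
move: (Hm F FS) => /existsP [j /forall_inP Hj].
by rewrite (eqP (Hj x hx)) (eqP (Hj z hz)).
Qed.

Lemma compA n y (S : {set {set 'I_n}}) (Q : {set 'I_y} -> bool) : (0 < y)%N ->
  #|[set c : {ffun 'I_n -> 'I_y} | Smono S c && Q (imf c)]| = cntQ y (ncomp S) Q.
Proof.
move=> y0.
set e := hadj S.
have sym : connect_sym e by apply: sym_connect_sym; apply: hadj_sym.
pose R := [set x | roots e x].
have Hb : ncomp S = #|R|.
  by rewrite /ncomp /n_comp_mem; apply: eq_card => x; rewrite !inE andbT.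
rewrite /cntQ Hb.
have rootR : forall x, fingraph.root e x \in R by move=> x; rewrite inE roots_root.
have er_eq : forall x0 x1 (P0 : x0 \in R) (P1 : x1 \in R) z, z \in R ->
    enum_rank_in P0 z = enum_rank_in P1 z.
  by move=> x0 x1 P0 P1 z Hz; apply: enum_val_inj; rewrite !enum_rankK_in.
have rootE : forall x, x \in R -> fingraph.root e x = x by move=> x; rewrite inE => /eqP.
pose phi (c : {ffun 'I_n -> 'I_y}) : {ffun 'I_#|R| -> 'I_y} :=
  [ffun j => c (enum_val j)].
have cR : forall c : {ffun 'I_n -> 'I_y}, Smono S c -> forall x,
    c x = c (enum_val (enum_rank_in (rootR x) (fingraph.root e x))).
  move=> c Hc x; rewrite (enum_rankK_in _ (rootR x)).
  by apply: (mono_const Hc); apply: connect_root.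
have imphi : forall c : {ffun 'I_n -> 'I_y}, Smono S c -> imf (phi c) = imf c.
  move=> c Hc; apply/setP => v; apply/imsetP/imsetP => -[x _ ->].
    by exists (enum_val x) => //; rewrite ffunE.
  by exists (enum_rank_in (rootR x) (fingraph.root e x)) => //; rewrite ffunE -cR.
rewrite -(card_in_imset (f := phi)); last first.
  move=> c1 c2; rewrite !inE => /andP[H1 _] /andP[H2 _] Heq.
  apply/ffunP => x; rewrite (cR c1 H1) (cR c2 H2).
  by move: (congr1 (fun g : {ffun 'I_#|R| -> 'I_y} => g (enum_rank_in (rootR x) (fingraph.root e x))) Heq); rewrite !ffunE.
apply: eq_card => d; rewrite inE; apply/imsetP/idP.
  by move=> [c]; rewrite inE => /andP[Hc HQ] ->; rewrite imphi.
move=> HQ.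
pose c : {ffun 'I_n -> 'I_y} := [ffun x => d (enum_rank_in (rootR x) (fingraph.root e x))].
have Hc : Smono S c.
  apply/forall_inP => F FS; apply: mono_of_const => // u v hu hv.
  have euv : fingraph.root e u = fingraph.root e v.
    apply/(fingraph.rootP sym)/connect1; apply/existsP; exists F; by rewrite FS hu hv.
  rewrite !ffunE; congr (d _); apply: enum_val_inj; rewrite !enum_rankK_in ?rootR //.
have phic : phi c = d.
  apply/ffunP => j; rewrite !ffunE; congr (d _); apply: enum_val_inj.
  by rewrite enum_rankK_in ?rootR // rootE // enum_valP.
exists c => //; rewrite inE Hc /= -imphi // phic //.
Qed.

Definition hitQ (i : nat) (W : {set 'I_(i.+2)}) : bool :=
  [forall j : 'I_i, [exists v in W, val v == (j : nat).+2]].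
Arguments hitQ i W : clear implicits.

Lemma bonf_exact (T I : finType) (U : {set T}) (D : {set I}) (A : I -> T -> bool) (m : nat) :
  (#|D| <= m)%N ->
  \sum_(S in powerset D | (#|S| <= m)%N)
      (-1) ^+ #|S| * (#|[set x in U | [forall j in S, A j x]]|)%:Z
  = (#|[set x in U | [forall j in D, ~~ A j x]]|)%:Z.
Proof.
move=> Dm; apply/eqP; rewrite -subr_eq0 bonf; apply/eqP; apply: big1 => x _.
case: ifP => // H; rewrite bin_small ?mulr0 //.
have : (#|[set j in D | A j x]| <= #|D|)%N by apply: subset_leq_card; apply/subsetP => j; rewrite inE => /andP[].
move: H; case: #|_| => // k _ /= Hk; exact: leq_trans Hk Dm.
Qed.

Lemma U_T (b i : nat) : (cntQ i.+2 b (hitQ i))%:Z = T_coef b i.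
Proof.
pose A (j : 'I_i) (d : {ffun 'I_b -> 'I_(i.+2)}) := [forall x, val (d x) != (j : nat).+2].
have := @bonf_exact _ _ setT setT A i.
rewrite cardsT card_ord leqnn => /(_ isT) H.
have -> : cntQ i.+2 b (hitQ i) = #|[set x in setT | [forall j in setT, ~~ A j x]]|.
  apply: eq_card => d; rewrite !inE /=; apply/forallP/forall_inP => Hd j.
    move=> _; rewrite negb_forall; move: (Hd j) => /exists_inP [v /imsetP [x _ ->] hv].
    by apply/existsP; exists x; rewrite hv.
  move: (Hd j (in_setT j)); rewrite negb_forall => /existsP [x hx].
  apply/exists_inP; exists (d x); first by apply/imsetP; exists x.
  by move: hx; rewrite negbK.
rewrite -H /T_coef.
have cnt : forall C : {set 'I_i}, #|[set x in setT | [forall j in C, A j x]]| = ((i.+2 - #|C|) ^ b)%N.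
  move=> C.
  pose K := [set v : 'I_(i.+2) | [forall j in C, val v != (j : nat).+2]].
  pose g (j : 'I_i) : 'I_(i.+2) := Ordinal (ltn_ord j : ((j : nat).+2 < i.+2)%N).
  have gi : injective g by move=> j1 j2 /(congr1 val) /= [/val_inj].
  have KC : ~: K = g @: C.
    apply/setP => v; rewrite !inE negb_forall; apply/existsP/imsetP.
      move=> [j]; rewrite negb_imply negbK => /andP[jC /eqP hv].
      by exists j => //; apply: val_inj; rewrite /= hv.
    move=> [j jC ->]; exists j; by rewrite jC /= eqxx.
  have cK : #|K| = (i.+2 - #|C|)%N.
    have := cardsC K; rewrite KC card_imset // (card_ord i.+2).
move: #|K| #|C| => p q; lia.
  rewrite -cK -[b in RHS]card_ord -card_ffun_on; apply: eq_card => d.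
  rewrite !inE; apply/forall_inP/ffun_onP => Hd.
    move=> x; rewrite inE; apply/forall_inP => j jC; move: (Hd j jC) => /forallP; exact.
  move=> j jC; apply/forallP => x; move: (Hd x); rewrite inE => /forall_inP; exact.
rewrite (eq_bigr (fun S : {set 'I_i} => (-1) ^+ #|S| * ((i.+2 - #|S|) ^ b)%N%:Z)); last first.
  by move=> S _; rewrite cnt.
rewrite (sum_by_size setT i (fun a => (-1) ^+ a * ((i.+2 - a) ^ b)%N%:Z)) cardsT card_ord.
apply: eq_bigr => a _.
have ai : (a <= i)%N by rewrite -ltnS.
rewrite mulrA [_ * (-1) ^+ _]mulrC; congr (_ * _).
have -> : (i.+2 - a = i - a + 2)%N by lia.
by rewrite -!natz natrX.
Qed.

Lemma T_van (b i : nat) : (b < i)%N -> T_coef b i = 0.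
Proof.
move=> bi; rewrite -U_T; apply/eqP; rewrite eqz_nat; apply/eqP.
apply: eq_card0 => d; rewrite inE; apply/negP => /forallP Hd.
have : (i <= b)%N.
  pose g (j : 'I_i) : 'I_(i.+2) := Ordinal (ltn_ord j : ((j : nat).+2 < i.+2)%N).
  have gi : injective g by move=> j1 j2 /(congr1 val) /= [/val_inj].
  have : g @: [set: 'I_i] \subset imf d.
    apply/subsetP => v /imsetP [j _ ->].
    move: (Hd j) => /exists_inP [w hw /eqP hj].
    by have -> : g j = w by apply: val_inj; rewrite /= hj.
  move/subset_leq_card; rewrite card_imset // cardsT card_ord => H.
  apply: leq_trans H _; rewrite /imf.
  by apply: leq_trans (leq_imset_card _ _) _; rewrite card_ord.
by rewrite leqNgt bi.
Qed.

Definition Dl (g : nat -> int) (i : nat) : int :=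
  \sum_(0 <= c < i.+1) (-1) ^+ c * ('C(i, c))%:Z * g (i - c)%N.

Lemma Dl0 g : Dl g 0 = g 0%N.
Proof. by rewrite /Dl big_nat1 /= mul1r. Qed.

Lemma DlS g i : Dl g i.+1 = Dl (fun y => g y.+1) i - Dl g i.
Proof.
rewrite /Dl big_nat_recl // [in X in _ = X - _]big_nat_recl //.
rewrite !bin0 !subn0 /= !mulr1 !expr0 !mul1r.
have -> : \sum_(0 <= c < i.+1) (-1) ^+ c.+1 * ('C(i.+1, c.+1))%:Z * g (i.+1 - c.+1)%N
   = \sum_(0 <= c < i.+1) (-1) ^+ c.+1 * ('C(i, c.+1))%:Z * g (i - c)%N
     - \sum_(0 <= c < i.+1) (-1) ^+ c * ('C(i, c))%:Z * g (i - c)%N.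
  rewrite -sumrB; apply: eq_bigr => c _; rewrite binS PoszD subSS exprS; ring.
rewrite big_nat_recr //= bin_small // mulr0 mul0r addr0.
rewrite addrA; congr (_ + _ - _); apply: eq_big_nat => c /andP[_ ci].
by congr (_ * g _); lia.
Qed.

Lemma newton (g : nat -> int) (x M : nat) : (x <= M)%N ->
  \sum_(0 <= i < M.+1) ('C(x, i))%:Z * Dl g i = g x.
Proof.
elim: x g M => [|x IH] g M xM.
  rewrite big_nat_recl // bin0 mul1r Dl0 big1_seq ?addr0 // => i _.
  by rewrite bin0n mul0r.
have := IH (fun y => g y.+1) M (ltnW xM) => /= <-.
rewrite big_nat_recl // bin0 mul1r.
rewrite (eq_bigr (fun i => ('C(x, i.+1))%:Z * Dl g i.+1 + ('C(x, i))%:Z * Dl g i.+1));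
  last by move=> i _; rewrite binS PoszD mulrDl.
rewrite big_split /=.
rewrite [in RHS](eq_bigr (fun i => ('C(x, i))%:Z * Dl g i.+1 + ('C(x, i))%:Z * Dl g i));
  last by move=> i _; rewrite DlS; ring.
rewrite big_split /= [X in _ = _ + X]big_nat_recl // bin0 mul1r.
rewrite [X in _ = X + _]big_nat_recr //= bin_small // mul0r addr0.
case: M xM => [//|M] xM.
rewrite [X in _ = _ + (_ + X)]big_nat_recr //= bin_small ?mul0r ?addr0 //.
rewrite [X in _ + (X + _) = _]big_nat_recr //= bin_small ?mul0r ?addr0 //.
ring.
Qed.

Lemma poly_id (b n x : nat) : (b <= n)%N ->
  ((x + 2)%N%:Z) ^+ b = \sum_(i < n.+1) T_coef b i * ('C(x, i))%:Z.
Proof.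
move=> bn; pose g y := ((y + 2)%N%:Z) ^+ b.
have TD : forall i, T_coef b i = Dl g i by move=> i; rewrite /T_coef /Dl big_mkord.
rewrite -(big_mkord xpredT (fun i => T_coef b i * ('C(x, i))%:Z)) (eq_bigr (fun i => ('C(x, i))%:Z * Dl g i)); last first.
  by move=> i _; rewrite TD mulrC.
have -> : ((x + 2)%N%:Z) ^+ b = g x by [].
case: (leqP x n) => xn; first by rewrite newton.
rewrite -(newton g (leqnn x)) (@big_cat_nat _ _ _ n.+1 0 x.+1) //=; last by rewrite ltnS ltnW.
rewrite [X in _ + X = _]big1_seq ?addr0 // => i /andP[_]; rewrite mem_index_iota => /andP[hi _].
by rewrite -TD T_van ?mulr0 //; lia.
Qed.

Lemma partition_nat (I : finType) (P : pred I) (h : I -> nat) (G : nat -> int) (n : nat) :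
  (forall x, P x -> (h x <= n)%N) ->
  \sum_(x | P x) G (h x) =
  \sum_(b < n.+1) (#|[set x | P x && (h x == b)]|)%:Z * G b.
Proof.
move=> Hh.
rewrite (partition_big (fun x => (inord (h x) : 'I_n.+1)) xpredT) //=.
apply: eq_bigr => b _.
rewrite (eq_bigr (fun _ => G b)); last first.
  move=> x /andP[Px /eqP <-]; rewrite inordK //; rewrite ltnS; exact: Hh.
rewrite (eq_bigl (fun x => x \in [set x | P x && (h x == b)])); last first.
  move=> x; rewrite inE; case Px: (P x) => //=.
  by rewrite -val_eqE /= inordK // ltnS Hh.
by rewrite sumr_const -mulr_natl natz.
Qed.

Lemma ncomp_le n (S : {set {set 'I_n}}) : (ncomp S <= n)%N.
Proof. by rewrite /ncomp /n_comp_mem -[X in (_ <= X)%N]card_ord max_card. Qed.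

Section Main.
Variables (n : nat) (E : {set {set 'I_n}}).

Definition Ucol (i : nat) := [set c : {ffun 'I_n -> 'I_(i.+2)} | hitQ i (imf c)].

Lemma cnt_S i (S : {set {set 'I_n}}) :
  (#|[set c in Ucol i | [forall F in S, monochromatic c F]]|)%:Z = T_coef (ncomp S) i.
Proof.
rewrite -U_T -(@compA n i.+2 S (hitQ i)) //; congr Posz; apply: eq_card => c.
by rewrite !inE andbC.
Qed.

Lemma T0 i : T_coef (ncomp (set0 : {set {set 'I_n}})) i = T_coef n i.
Proof.
rewrite -!U_T -(@compA n i.+2 set0 (hitQ i)) //; congr Posz; apply: eq_card => c.
rewrite !inE; have -> : Smono set0 c by apply/forall_inP => F; rewrite inE.
by [].
Qed.

Lemma ps_eq m i : partial_sum E m i =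
  \sum_(S in powerset E | (#|S| <= m)%N) (-1) ^+ #|S| * T_coef (ncomp S) i.
Proof.
rewrite regroup /partial_sum; apply: eq_bigr => a _.
rewrite (eq_bigr (fun S => (-1) ^+ a * T_coef (ncomp S) i)); last first.
  by move=> S /andP[_ /eqP ->].
rewrite -mulr_sumr; congr (_ * _).
case: (posnP a) => [a0|apos].
  rewrite a0 (big_pred1 set0); last first.
    by move=> S; rewrite /= cards_eq0 powersetE andb_idl // => /eqP ->; rewrite sub0set.
  rewrite T0 /s_count /= big_ord_recr /= eqxx mul1r big1 ?add0r // => b _.
  by rewrite (ltn_eqF (ltn_ord b)) mul0r.
rewrite (partition_nat (fun S => T_coef S i) (n := n)); last by move=> S _; apply: ncomp_le.
apply: eq_bigr => b _; congr (Posz _ * _).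
rewrite /s_count; case: eqP => [a0|_]; first by move: apos; rewrite a0.
by apply: eq_card => S; rewrite !inE andbA.
Qed.

End Main.

Section Main2.
Variables (n : nat) (E : {set {set 'I_n}}).

Definition Pcnt (i : nat) := #|[set c in Ucol n i | [forall F in E, ~~ monochromatic c F]]|.

Lemma ps_cnt m i : partial_sum E m i =
  \sum_(S in powerset E | (#|S| <= m)%N)
     (-1) ^+ #|S| * (#|[set c in Ucol n i | [forall F in S, monochromatic c F]]|)%:Z.
Proof. by rewrite ps_eq; apply: eq_bigr => S _; rewrite cnt_S. Qed.

Lemma ps_full i : partial_sum E #|E| i = (Pcnt i)%:Z.
Proof. by rewrite ps_cnt bonf_exact. Qed.

Lemma ps_even m i : ~~ odd m -> (Pcnt i)%:Z <= partial_sum E m i.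
Proof.
move=> hm; rewrite -subr_ge0 ps_cnt bonf; apply: sumr_ge0 => c _.
case: ifP => // _; rewrite -signr_odd (negbTE hm) expr0 mul1r; by [].
Qed.

Lemma ps_odd m i : odd m -> partial_sum E m i <= (Pcnt i)%:Z.
Proof.
move=> hm; rewrite -subr_le0 ps_cnt bonf; apply: sumr_le0 => c _.
case: ifP => // _; rewrite -signr_odd hm expr1 mulN1r oppr_le0; by [].
Qed.

Lemma chi_expand k : (1 <= k)%N ->
  (chi E k.+1)%:Z = \sum_(i < n.+1) partial_sum E #|E| i * ('C(k.-1, i))%:Z.
Proof.
move=> k1.
have := @bonf_exact _ _ setT E (fun F (c : {ffun 'I_n -> 'I_k.+1}) => monochromatic c F) #|E| (leqnn _).
have -> : #|[set x in setT | [forall j in E, ~~ monochromatic (x : {ffun 'I_n -> 'I_k.+1}) j]]| = chi E k.+1.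
  by apply: eq_card => c; rewrite !inE.
move <-.
rewrite (eq_bigr (fun S : {set {set 'I_n}} => (-1) ^+ #|S| * \sum_(i < n.+1) T_coef (ncomp S) i * ('C(k.-1, i))%:Z)); last first.
  move=> S _; congr (_ * _); rewrite -poly_id ?ncomp_le //.
  have -> : #|[set x in setT | [forall j in S, monochromatic (x : {ffun 'I_n -> 'I_k.+1}) j]]|
      = cntQ k.+1 (ncomp S) (fun _ => true).
    rewrite -compA //; apply: eq_card => c; rewrite !inE andbT //.
  rewrite /cntQ (eq_card (B := [set: {ffun 'I_(ncomp S) -> 'I_k.+1}])); last first.
    by move=> d; rewrite !inE.
  rewrite cardsT card_ffun !card_ord.
  have -> : (k.-1 + 2 = k.+1)%N by lia.
  by rewrite -!natz natrX.
rewrite (eq_bigr (fun S : {set {set 'I_n}} => \sum_(i < n.+1) (-1) ^+ #|S| * T_coef (ncomp S) i * ('C(k.-1, i))%:Z)); last first.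
  by move=> S _; rewrite mulr_sumr; apply: eq_bigr => i _; rewrite mulrA.
rewrite exchange_big /=; apply: eq_bigr => i _.
by rewrite ps_eq mulr_suml.
Qed.

Lemma fv_uniq (d : nat -> int) :
  (forall x, \sum_(i < n.+1) d i * ('C(x, i))%:Z = 0) -> forall i, (i <= n)%N -> d i = 0.
Proof.
move=> H; elim/ltn_ind => i IH iN.
have := H i; rewrite (bigD1 (Ordinal (iN : (i < n.+1)%N))) //= binn mulr1 big1 ?addr0 // => j /= ji.
case: (ltngtP j i) => h.
- rewrite IH ?mul0r //; exact: leq_trans (ltnW h) iN.
- by rewrite bin_small ?mulr0.
- by move: ji; rewrite -val_eqE /= h eqxx.
Qed.

Lemma last_part i l : (forall F, F \in E -> (l <= #|F|)%N) -> (n - l + 2 <= i)%N ->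
  Pcnt i = cntQ i.+2 n (hitQ i).
Proof.
move=> Hl Hi; rewrite /Pcnt /cntQ; apply: eq_card => c; rewrite !inE.
case Hc: (hitQ i (imf c)) => //=.
apply/forall_inP => F FE; apply/negP => /existsP [j /forall_inP Hj].
pose g (t : 'I_i) : 'I_(i.+2) := Ordinal (ltn_ord t : ((t : nat).+2 < i.+2)%N).
have gi : injective g by move=> j1 j2 /(congr1 val) /= [/val_inj].
pose W := g @: [set: 'I_i].
have sub : W :\ j \subset c @: ~: F.
  apply/subsetP => v; rewrite !inE => /andP[vj /imsetP [t _ vt]].
  move: Hc => /forallP /(_ t) /exists_inP [w /imsetP [x _ ->] /eqP hx].
  have gt : g t = c x by apply: val_inj; rewrite /= hx.
  apply/imsetP; exists x; last by rewrite vt gt.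
  rewrite inE; apply/negP => xF.
  by move: vj; rewrite vt gt (eqP (Hj x xF)) eqxx.
have c1 := subset_leq_card sub.
have c2 : (#|c @: ~: F| <= #|~: F|)%N := leq_imset_card _ _.
have c3 := cardsC F; rewrite card_ord in c3.
have c4 : #|W| = i by rewrite card_imset // cardsT card_ord.
have c5 := cardsD1 j W.
have c6 := Hl F FE.
have c7 : (((j \in W) : nat) <= 1)%N by case: (j \in W).
move: c1 c2 c3 c4 c5 c6 c7; move: (j \in W : nat) #|W :\ j| #|c @: ~: F| #|~: F| #|F| #|W|.
move=> p1 p2 p3 p4 p5 p6; lia.
Qed.

End Main2.

Theorem mainTheorem8 (n : nat) (E : {set {set 'I_n}}) :
  hypergraph_no_loops E ->
  (exists f : nat -> int, is_fvector_chi_shift E f) /\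
  (forall f : nat -> int, is_fvector_chi_shift E f ->
    forall i : nat, (i <= n)%N ->
      [/\ f i = partial_sum E #|E| i,
          (forall m : nat, (m <= #|E|)%N -> ~~ odd m -> (f i <= partial_sum E m i)%R),
          (forall m : nat, (m <= #|E|)%N -> odd m -> (partial_sum E m i <= f i)%R) &
          (forall l : nat, (exists2 F, F \in E & #|F| = l) ->
             (forall F, F \in E -> (l <= #|F|)%N) ->
             (n - l + 2 <= i)%N ->
             f i = (\sum_(j < i.+1) (-1) ^+ j * ('C(i, j))%:Z * ((i - j + 2)%N)%:Z ^+ n)%R)]).
Proof.
move=> _; split.
  by exists (fun i => partial_sum E #|E| i) => k k1; apply: chi_expand.
move=> f hf.
have fi : forall i, (i <= n)%N -> f i = partial_sum E #|E| i.
  move=> i iN; apply/eqP; rewrite -subr_eq0; apply/eqP; move: i iN.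
  apply: (fv_uniq (d := fun i => f i - partial_sum E #|E| i)) => x.
  rewrite (eq_bigr (fun i : 'I_n.+1 => f i * ('C(x, i))%:Z - partial_sum E #|E| i * ('C(x, i))%:Z));
    last by move=> i _; rewrite mulrBl.
  by rewrite sumrB -(hf x.+1) // -(chi_expand E (ltn0Sn x)) subrr.
move=> i iN; split.
- exact: fi.
- by move=> m _ hm; rewrite fi // ps_full ps_even.
- by move=> m _ hm; rewrite fi // ps_full ps_odd.
- move=> l _ Hl Hi; rewrite fi // ps_full (last_part Hl Hi) U_T //.
Qed.
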